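(* Let $q$ be a prime power, $\mathbb{F}$ an extension field of $\mathbb{F}_q$, $\ell\ge1$, and $C$ an $[n,k]_{\mathbb{F}}$ code with generator matrix $G\in\mathbb{F}^{k\times n}$. The following are equivalent: (1) $C$ is $\mathrm{MRD}(\ell)$; (2) $C$ is MRD and for all $\mathbb{F}_q$-subspaces $V_1,\dots,V_\ell\subseteq\mathbb{F}_q^n$, each of dimension at most $k$, one has $\bigcap_{i=1}^\ell G_{V_i}=0$ if and only if $\bigcap_{i=1}^\ell W_{V_i}=0$, where $W=(Z_{i,j})_{i\in[k],j\in[n]}$ is a matrix of independent variables over $\mathbb{F}(Z_{1,1},\dots,Z_{k,n})$.
   Context: $C$ is an $\mathbb{F}$-subspace of $\mathbb{F}^n$ of dimension $k$, $C=\{G^T\bm{u}\}$. $C$ is MRD if every nonzero codeword $\bm{v}$ satisfies $\dim_{\mathbb{F}_q}\mathrm{span}_{\mathbb{F}_q}\{v_1,\dots,v_n\}\ge n-k+1$. For an $\mathbb{F}_q$-subspace $V\subseteq\mathbb{F}_q^n$ and a matrix $H$ with $n$ columns, $H_V$ is the column span (over the field of entries of $H$) of $HA$ for any $A\in\mathbb{F}_q^{n\times\dim V}$ whose $\mathbb{F}_q$-column span is $V$. $C$ is $\mathrm{MRD}(\ell)$ if for all $\mathbb{F}_q$-subspaces $V_1,\dots,V_\ell\subseteq\mathbb{F}_q^n$ of dimension at most $k$, $\dim(\bigcap_i G_{V_i})=\dim(\bigcap_i W_{V_i})$, with $W$ taken over $\mathbb{F}_q(Z_{1,1},\dots,Z_{k,n})$.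 *)

(* Defs.v *)
From HB Require Import structures.
From mathcomp Require Import all_boot all_order all_algebra.
From mathcomp Require Import mpoly.
Set Implicit Arguments. Unset Strict Implicit. Unset Printing Implicit Defensive.
Import Order.TTheory GRing.Theory Num.Theory.
Local Open Scope ring_scope.

(* Setting: K = F_q is a finite field, F is an extension field of K given by
   the (necessarily injective) ring morphism phi : K -> F. *)

Definition Fq_indep (K : finFieldType) (F : fieldType) (phi : {rmorphism K -> F})
  (n : nat) (v : 'rV[F]_n) (S : {set 'I_n}) : bool :=
  [forall a : {ffun 'I_n -> K},
    (\sum_(j in S) phi (a j) * v 0 j == 0) ==> [forall j in S, a j == 0]].

(* dim_{F_q} span_{F_q} {v_1, ..., v_n}: the maximal size of an F_q-linearly
   independent subfamily of the generators v_1, ..., v_n. *)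
Definition Fq_rank (K : finFieldType) (F : fieldType) (phi : {rmorphism K -> F})
  (n : nat) (v : 'rV[F]_n) : nat :=
  \max_(S : {set 'I_n} | Fq_indep phi v S) #|S|.

(* C = { G^T u } is MRD: every nonzero codeword v = G^T u (written as the row
   vector u *m G) has F_q-rank at least n - k + 1. *)
Definition MRD (K : finFieldType) (F : fieldType) (phi : {rmorphism K -> F})
  (k n : nat) (G : 'M[F]_(k, n)) : Prop :=
  forall u : 'rV[F]_k, u *m G != 0 -> (n - k + 1 <= Fq_rank phi (u *m G))%N.

(* An F_q-subspace V of F_q^n is represented as the row space of a matrix
   V : 'M[K]_n.  A := (row_base V)^T is an n x dim V matrix over F_q whose
   column span is V.  H_V, the column span of H A (over the field L of entries
   of H, K embedded in L by psi), is represented as the row space of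
   (H A)^T = A^T H^T, a subspace of 'rV[L]_k. *)
Definition subV (K : finFieldType) (L : fieldType) (psi : K -> L)
  (k n : nat) (H : 'M[L]_(k, n)) (V : 'M[K]_n) : 'M[L]_(\rank V, k) :=
  map_mx psi (row_base V) *m H^T.

Definition capV (K : finFieldType) (L : fieldType) (psi : K -> L)
  (k n l : nat) (H : 'M[L]_(k, n)) (V : 'I_l -> 'M[K]_n) : 'M[L]_k :=
  (\bigcap_(i < l) <<subV psi H (V i)>>)%MS.

Definition ratfun (R : idomainType) (k n : nat) :=
  {fraction {mpoly R[k * n]}}.

Definition Wmat (R : idomainType) (k n : nat) : 'M[ratfun R k n]_(k, n) :=
  \matrix_(i < k, j < n) (tofrac ('X_(mxvec_index i j) : {mpoly R[k * n]})).

Definition embZ (K : finFieldType) (R : idomainType) (psi : K -> R) (k n : nat)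
  (a : K) : ratfun R k n :=
  tofrac (psi a)%:MP.

Definition MRDl (K : finFieldType) (F : fieldType) (phi : {rmorphism K -> F})
  (l k n : nat) (G : 'M[F]_(k, n)) : Prop :=
  forall V : 'I_l -> 'M[K]_n, (forall i, (\rank (V i) <= k)%N) ->
    \rank (capV phi G V) = \rank (capV (@embZ K K id k n) (Wmat K k n) V).

(* Main.v *)
Require Import Defs.
From HB Require Import structures.
From mathcomp Require Import all_boot all_order all_algebra.
From mathcomp Require Import mpoly.
From mathcomp Require Import zify ring.
From mathcomp Require Import generic_quotient.
Set Implicit Arguments. Unset Strict Implicit. Unset Printing Implicit Defensive.
Import Order.TTheory GRing.Theory Num.Theory.
Local Open Scope ring_scope.
Section PartA.
Variable K : finFieldType.

Definition Tm (L : fieldType) (f : {rmorphism K -> L}) k n (H : 'M[L]_(k, n))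
  (A : 'M[K]_n) : 'M[L]_(n, k) := map_mx f A *m H^T.

Lemma capV_T (L : fieldType) (f : {rmorphism K -> L}) k n l (H : 'M[L]_(k, n))
  (V : 'I_l -> 'M[K]_n) :
  capV f H V = (\bigcap_(i < l) <<Tm f H (V i)>>)%MS.
Proof.
rewrite /capV; apply: eq_bigr => i _; apply: eq_genmx; rewrite /subV /Tm.
by apply: eqmxMr; apply/map_eqmx; apply: eq_row_base.
Qed.

Lemma rank_cap_drop (L : fieldType) n (A A' U : 'M[L]_n) :
  (A' <= A)%MS -> (\rank A <= \rank A' + 1)%N ->
  (\rank (A :&: U)%MS <= \rank (A' :&: U)%MS + 1)%N.
Proof.
move=> sA'A rA.
have h1 := mxrank_sum_cap (A :&: U)%MS A'.
have h2 : (\rank (A :&: U + A')%MS <= \rank A)%N.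
  by apply: mxrankS; rewrite addsmx_sub capmxSl.
have h3 : (\rank (A :&: U :&: A')%MS <= \rank (A' :&: U))%N.
  apply: mxrankS; rewrite sub_capmx capmxSr /=.
  by apply: submx_trans (capmxSl _ _) (capmxSr _ _).
lia.
Qed.

Lemma rank_Tm_drop (L : fieldType) (f : {rmorphism K -> L}) k n (H : 'M[L]_(k, n))
  (A A' : 'M[K]_n) :
  (A' <= A)%MS -> (\rank A <= \rank A' + 1)%N ->
  (Tm f H A' <= Tm f H A)%MS /\ (\rank (Tm f H A) <= \rank (Tm f H A') + 1)%N.
Proof.
move=> sA'A rA; split; first by rewrite /Tm submxMr // map_submx.
have eA := addsmx_diff_cap_eq A A'.
have eA' : (A :&: A' :=: A')%MS by apply/capmx_idPr.
have h1 : (Tm f H A <= Tm f H (A :\: A')%MS + Tm f H A')%MS.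
  rewrite /Tm -addsmxMr; apply: submxMr.
  rewrite -map_addsmx map_submx.
  by rewrite -{1}eA addsmxS ?submx_refl // eA' submx_refl.
have h2 := mxrank_adds_leqif (Tm f H (A :\: A')%MS) (Tm f H A').
have h3 : (\rank (Tm f H (A :\: A')%MS) <= \rank (A :\: A')%MS)%N.
  by rewrite /Tm (leq_trans (mxrankM_maxl _ _)) // mxrank_map.
have h4 := mxrank_cap_compl A A'.
rewrite eA' in h4.
have h5 := mxrankS h1.
move: h2 => [h2 _]. lia.
Qed.

End PartA.
Section PartA2.
Variable K : finFieldType.

Lemma rank_Dj (L : fieldType) d (j : 'I_d) :
  (\rank ((1%:M - delta_mx j j)%R : 'M[L]_d) + 1 = d)%N.
Proof.
set Dj := (1%:M - delta_mx j j : 'M[L]_d).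
have h1 : (d <= \rank Dj + 1)%N.
  have e1 : (1%:M : 'M[L]_d) = Dj + delta_mx j j by rewrite /Dj subrK.
  have := mxrank_add Dj (delta_mx j j); rewrite -e1 mxrank1 mxrank_delta //.
have h2 : (\rank Dj < d)%N.
  rewrite ltn_neqAle rank_leq_row andbT; apply/negP => /eqP rD.
  have uD : Dj \in unitmx by rewrite -row_free_unit /row_free rD.
  have e0 : (delta_mx 0 j : 'rV[L]_d) *m Dj = 0.
    by rewrite /Dj mulmxBr mulmx1 mul_delta_mx subrr.
  have := congr1 (mulmx^~ (invmx Dj)) e0; rewrite /= mulmxK // mul0mx => /matrixP/(_ 0 j).
  by rewrite !mxE !eqxx /= => /eqP; rewrite oner_eq0.
lia.
Qed.

Lemma drop_exact (L : fieldType) (f : {rmorphism K -> L}) k n (H : 'M[L]_(k, n))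
  (A : 'M[K]_n) (U : 'M[L]_k) :
  \rank (Tm f H A) = \rank A -> (<<Tm f H A>> :&: U)%MS != 0 ->
  exists A' : 'M[K]_n, [/\ (A' <= A)%MS, (\rank A' + 1 = \rank A)%N &
     (\rank (<<Tm f H A'>> :&: U)%MS + 1 = \rank (<<Tm f H A>> :&: U)%MS)%N].
Proof.
move=> rTA X0.
set d := \rank A. set B := row_base A.
have fB : row_free B := row_base_free A.
set T' := map_mx f B *m H^T.
have eT : (T' :=: Tm f H A)%MS.
  by apply: eqmxMr; apply/map_eqmx; apply: eq_row_base.
have fT : row_free T' by rewrite /row_free eT rTA.
set X := (<<Tm f H A>> :&: U)%MS.
have [i xn0] : exists i, row i X != 0.
  apply/existsP; apply: contraR X0 => /existsPn h.
  apply/eqP/row_matrixP => i; rewrite row0; exact/eqP/negPn/h.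
set x := row i X.
have xX : (x <= X)%MS by apply: row_sub.
have xT : (x <= T')%MS.
  rewrite eT; apply: (submx_trans xX); apply: (submx_trans (capmxSl _ _)).
  by rewrite genmxE.
case/submxP: xT => y defx.
have [j yj] : exists j, y 0 j != 0.
  apply/existsP; apply: contraR xn0 => /existsPn h.
  suff y0 : y = 0 by rewrite -/x defx y0 mul0mx.
  apply/matrixP => a b; rewrite ord1 mxE; exact/eqP/negPn/h.
set Dj := (1%:M - delta_mx j j : 'M[K]_d).
exists <<Dj *m B>>%MS.
have sA : (<<Dj *m B>> <= A)%MS.
  by rewrite genmxE (submx_trans (submxMl _ _)) // eq_row_base.
have rA : (\rank <<Dj *m B>>%MS + 1 = d)%N.
  by rewrite genmxE mxrankMfree // rank_Dj.
split => //.
have [sT rT] := rank_Tm_drop f H sA (eq_leq (esym rA)).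
set X' := (<<Tm f H <<Dj *m B>>%MS>> :&: U)%MS.
have h1 : (\rank X <= \rank X' + 1)%N.
  apply: rank_cap_drop; first by rewrite !genmxE.
  by rewrite !genmxE.
have sXX : (X' <= X)%MS by apply: capmxS => //; rewrite !genmxE.
have h2 : (\rank X' < \rank X)%N.
  rewrite ltn_neqAle mxrankS // andbT; apply/negP => /eqP eqr.
  have : (X <= X')%MS by rewrite -(mxrank_leqif_sup sXX) eqr.
  move=> /(submx_trans xX) => xX'.
  have := submx_trans xX' (capmxSl _ _); rewrite genmxE.
  have e2 : (Tm f H <<Dj *m B>> :=: map_mx f (Dj *m B) *m H^T)%MS.
    by apply: eqmxMr; apply/map_eqmx; apply: genmxE.
  rewrite e2 map_mxM -mulmxA -/T'.
  case/submxP => z; rewrite defx mulmxA => /(row_free_inj fT) /matrixP /(_ 0 j).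
  rewrite !mxE => eyj; move: yj; rewrite eyj big1 ?eqxx // => r _.
  by rewrite !mxE eqxx andbT subrr rmorph0 mulr0.
lia.
Qed.
End PartA2.
Section PartA3.
Variable K : finFieldType.

Lemma eq0_rank (L : fieldType) k (A : 'M[L]_k) :
  (A == (0 : 'M_k))%MS = (\rank A == 0%N).
Proof. by rewrite mxrank_eq0; apply/eqmx0P/eqP. Qed.

Lemma capV_split (L : fieldType) (f : {rmorphism K -> L}) k n l (H : 'M[L]_(k, n))
  (V : 'I_l -> 'M[K]_n) (i0 : 'I_l) :
  capV f H V = (<<Tm f H (V i0)>> :&: \bigcap_(i < l | i != i0) <<Tm f H (V i)>>)%MS.
Proof. by rewrite capV_T (bigD1 i0). Qed.

Definition upd n l (V : 'I_l -> 'M[K]_n) (i0 : 'I_l) (A : 'M[K]_n) :=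
  fun i => if i == i0 then A else V i.

Lemma capV_upd (L : fieldType) (f : {rmorphism K -> L}) k n l (H : 'M[L]_(k, n))
  (V : 'I_l -> 'M[K]_n) (i0 : 'I_l) A :
  capV f H (upd V i0 A) =
    (<<Tm f H A>> :&: \bigcap_(i < l | i != i0) <<Tm f H (V i)>>)%MS.
Proof.
rewrite (capV_split _ _ _ i0) /upd eqxx; congr (_ :&: _)%MS.
by apply: eq_bigr => i /negbTE ->.
Qed.

Lemma one_side (L1 L2 : fieldType) (f1 : {rmorphism K -> L1}) (f2 : {rmorphism K -> L2})
  k n l (H1 : 'M[L1]_(k, n)) (H2 : 'M[L2]_(k, n)) (i0 : 'I_l) (V : 'I_l -> 'M[K]_n) :
  (forall A : 'M[K]_n, (\rank A <= k)%N -> \rank (Tm f1 H1 A) = \rank A) ->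
  (forall V : 'I_l -> 'M[K]_n, (forall i, (\rank (V i) <= k)%N) ->
     (capV f1 H1 V == (0 : 'M_k))%MS = (capV f2 H2 V == (0 : 'M_k))%MS) ->
  (forall V' : 'I_l -> 'M[K]_n, (forall i, (\rank (V' i) <= k)%N) ->
     (\rank (V' i0) < \rank (V i0))%N ->
     \rank (capV f1 H1 V') = \rank (capV f2 H2 V')) ->
  (forall i, (\rank (V i) <= k)%N) ->
  (\rank (capV f2 H2 V) <= \rank (capV f1 H1 V))%N.
Proof.
move=> inj1 zeq IH rV.
have [t0|tn0] := eqVneq (\rank (capV f1 H1 V)) 0%N.
  move: (zeq V rV); rewrite !eq0_rank t0 eqxx => /esym/eqP ->; by [].
have X0 : capV f1 H1 V != 0 by rewrite -mxrank_eq0.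
rewrite (capV_split _ _ _ i0) in X0.
have [A' [sA rA rX]] := drop_exact (inj1 _ (rV i0)) X0.
set V' := upd V i0 A'.
have rV' : forall i, (\rank (V' i) <= k)%N.
  move=> i; rewrite /V' /upd; case: (i == i0) => //.
  exact: leq_trans (mxrankS sA) (rV i0).
have lt : (\rank (V' i0) < \rank (V i0))%N.
  by rewrite /V' /upd eqxx -rA addn1 ltnSn.
have e := IH V' rV' lt; rewrite /V' !capV_upd in e.
have [sT rT] := rank_Tm_drop f2 H2 sA (eq_leq (esym rA)).
have h := @rank_cap_drop _ _ <<Tm f2 H2 (V i0)>>%MS <<Tm f2 H2 A'>>%MS
   (\bigcap_(i < l | i != i0) <<Tm f2 H2 (V i)>>)%MS.
rewrite !genmxE in h; have {h} h := h sT rT.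
rewrite (capV_split f1 _ _ i0) (capV_split f2 _ _ i0).
lia.
Qed.

Lemma main_ind (L1 L2 : fieldType) (f1 : {rmorphism K -> L1}) (f2 : {rmorphism K -> L2})
  k n l (H1 : 'M[L1]_(k, n)) (H2 : 'M[L2]_(k, n)) (i0 : 'I_l) :
  (forall A : 'M[K]_n, (\rank A <= k)%N -> \rank (Tm f1 H1 A) = \rank A) ->
  (forall A : 'M[K]_n, (\rank A <= k)%N -> \rank (Tm f2 H2 A) = \rank A) ->
  (forall V : 'I_l -> 'M[K]_n, (forall i, (\rank (V i) <= k)%N) ->
     (capV f1 H1 V == (0 : 'M_k))%MS = (capV f2 H2 V == (0 : 'M_k))%MS) ->
  forall V : 'I_l -> 'M[K]_n, (forall i, (\rank (V i) <= k)%N) ->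
     \rank (capV f1 H1 V) = \rank (capV f2 H2 V).
Proof.
move=> inj1 inj2 zeq V.
move: {2}(\rank (V i0)) (leqnn (\rank (V i0))) => m.
elim: m V => [|m IHm] V rm rV.
  apply/eqP; rewrite eqn_leq; apply/andP; split.
    apply: (one_side (i0:=i0) inj2) => //; first by move=> W hW; rewrite zeq.
    by move=> V' _ lt; exfalso; move: lt; rewrite ltnNge => /negP; apply; exact: leq_trans rm _.
  apply: (one_side (i0:=i0) inj1) => //.
  by move=> V' _ lt; exfalso; move: lt; rewrite ltnNge => /negP; apply; exact: leq_trans rm _.
have IH : forall V' : 'I_l -> 'M[K]_n, (forall i, (\rank (V' i) <= k)%N) ->
     (\rank (V' i0) < \rank (V i0))%N ->
     \rank (capV f1 H1 V') = \rank (capV f2 H2 V').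
  move=> V' rV' lt; apply: IHm => //; rewrite -ltnS; exact: leq_trans lt rm.
apply/eqP; rewrite eqn_leq; apply/andP; split.
  apply: (one_side (i0:=i0) inj2) => //; first by move=> W hW; rewrite zeq.
  by move=> V' rV' lt; rewrite (IH V' rV' lt).
exact: (one_side inj1 zeq IH rV).
Qed.
End PartA3.
Section PartB.
Variables (K : finFieldType) (F : fieldType) (phi : {rmorphism K -> F}) (n : nat).

Definition Lf (v : 'rV[F]_n) (x : 'rV[K]_n) : F := \sum_j phi (x 0 j) * v 0 j.

Lemma Lf0 v : Lf v 0 = 0.
Proof. by rewrite /Lf big1 // => j _; rewrite mxE rmorph0 mul0r. Qed.

Lemma LfD v x y : Lf v (x + y) = Lf v x + Lf v y.
Proof. by rewrite /Lf -big_split; apply: eq_bigr => j _; rewrite mxE rmorphD mulrDl. Qed.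

Lemma LfZ v a x : Lf v (a *: x) = phi a * Lf v x.
Proof. by rewrite /Lf mulr_sumr; apply: eq_bigr => j _; rewrite mxE rmorphM mulrA. Qed.

Lemma Lf_sum v (I : finType) (P : pred I) (G : I -> 'rV[K]_n) :
  Lf v (\sum_(i | P i) G i) = \sum_(i | P i) Lf v (G i).
Proof. exact: (big_morph _ (LfD v) (Lf0 v)). Qed.

Definition Nk (v : 'rV[F]_n) : 'M[K]_n :=
  (\sum_(x : 'rV[K]_n | Lf v x == 0) <<x>>)%MS.

Lemma Nk_sub v x : (x <= Nk v)%MS = (Lf v x == 0).
Proof.
apply/idP/idP; last first.
  by move=> h; apply: (sumsmx_sup x) => //; rewrite genmxE.
case/sub_sumsmxP => u ->; rewrite Lf_sum big1 // => y /eqP Ly.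
have : (u y *m <<y>> <= y)%MS by rewrite (submx_trans (submxMl _ _)) // genmxE.
by case/sub_rVP => a ->; rewrite LfZ Ly mulr0.
Qed.

Lemma Lf_mul v m (w : 'rV[K]_m) (X : 'M[K]_(m, n)) :
  Lf v (w *m X) = \sum_r phi (w 0 r) * Lf v (row r X).
Proof.
rewrite mulmx_sum_row Lf_sum; apply: eq_bigr => r _; by rewrite LfZ.
Qed.

Definition PS (S : {set 'I_n}) : 'M[K]_(#|S|, n) :=
  \matrix_(r < #|S|, j < n) ((@enum_val _ (mem S) r == j)%:R : K).

Lemma PS_supp S (x : 'rV[K]_n) j : (x <= PS S)%MS -> j \notin S -> x 0 j = 0.
Proof.
case/submxP => w -> jS; rewrite mxE big1 // => r _; rewrite mxE.
case: eqP => [e|]; last by rewrite mulr0.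
by move: jS; rewrite -e enum_valP.
Qed.

Lemma PS_rank S : \rank (PS S) = #|S|.
Proof.
apply/eqP; rewrite eqn_leq rank_leq_row /=.
have e : PS S *m (PS S)^T = 1%:M.
  apply/matrixP => r r'; rewrite !mxE.
  rewrite (bigD1 (enum_val r)) //= big1 ?addr0; last first.
    by move=> j /negbTE nj; rewrite !mxE eq_sym nj mul0r.
  rewrite !mxE eqxx mul1r; case: (eqVneq r r') => [->|nr]; first by rewrite eqxx.
  by rewrite (inj_eq enum_val_inj) eq_sym (negbTE nr).
by rewrite -{1}(mxrank1 K #|S|) -e mxrankM_maxl.
Qed.

Lemma PS_row (S : {set 'I_n}) (j : 'I_n) : j \in S -> ((delta_mx 0 j : 'rV[K]_n) <= PS S)%MS.
Proof.
move=> jS; have -> : (delta_mx 0 j : 'rV[K]_n) = row (enum_rank_in jS j) (PS S).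
  apply/matrixP => a b; rewrite !mxE ord1 eqxx /= (enum_rankK_in jS jS).
  by rewrite eq_sym.
by rewrite row_sub.
Qed.

Definition yS (S : {set 'I_n}) (a : {ffun 'I_n -> K}) : 'rV[K]_n :=
  \row_j (if j \in S then a j else 0).

Lemma yS_sub S a : (yS S a <= PS S)%MS.
Proof.
apply/submxP; exists (\row_r a (enum_val r)).
apply/matrixP => i j; rewrite ord1 !mxE.
case: ifPn => jS.
  rewrite (bigD1 (enum_rank_in jS j)) //= !mxE (enum_rankK_in jS jS) eqxx mulr1.
  rewrite big1 ?addr0 // => r nr; rewrite !mxE.
  case: eqP => [e|]; last by rewrite mulr0.
  have := enum_valK_in jS r; rewrite e => h.
  by rewrite h eqxx in nr.
rewrite big1 // => r _; rewrite !mxE; case: eqP => [e|]; last by rewrite mulr0.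
by move: jS; rewrite -e enum_valP.
Qed.

Lemma Lf_yS v S a : Lf v (yS S a) = \sum_(j in S) phi (a j) * v 0 j.
Proof.
rewrite /Lf [RHS]big_mkcond; apply: eq_bigr => j _; rewrite mxE.
by case: ifP; rewrite ?rmorph0 ?mul0r.
Qed.

Lemma indep_cap v S : Fq_indep phi v S -> (PS S :&: Nk v)%MS = 0.
Proof.
move=> /forallP ind.
suff h : forall x : 'rV[K]_n, (x <= PS S :&: Nk v)%MS -> x = 0.
  apply/row_matrixP => i; rewrite row0; apply: h; exact: row_sub.
move=> x; rewrite sub_capmx => /andP [xP xN].
set a := [ffun j => x 0 j].
have ex : x = yS S a.
  apply/matrixP => i j; rewrite ord1 !mxE ffunE; case: ifPn => // jS.
  exact: PS_supp xP jS.
move: xN; rewrite Nk_sub ex Lf_yS => L0.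
have /implyP/(_ L0)/forall_inP a0 := ind a.
apply/matrixP => i j; rewrite !mxE; case: ifP => // jS.
by apply/eqP; exact: a0.
Qed.

Lemma Fq_rank_le v : (Fq_rank phi v + \rank (Nk v) <= n)%N.
Proof.
suff h : (Fq_rank phi v <= n - \rank (Nk v))%N.
  by have := rank_leq_row (Nk v); lia.
apply/bigmax_leqP => S indS.
have := mxrank_disjoint_sum (indep_cap indS); rewrite PS_rank => e.
have := rank_leq_col (PS S + Nk v)%MS; rewrite e; lia.
Qed.

Lemma Fq_rank_ge v : (n <= Fq_rank phi v + \rank (Nk v))%N.
Proof.
have ne : (0 < #|Fq_indep phi v|)%N.
  apply/card_gt0P; exists set0; rewrite unfold_in /Fq_indep.
  apply/forallP => a; apply/implyP => _; apply/forall_inP => j; by rewrite in_set0.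
have [S0 indS0 eS0] := eq_bigmax_cond (fun S : {set 'I_n} => #|S|) ne.
rewrite /Fq_rank eS0.
rewrite leqNgt; apply/negP => lt.
have e := mxrank_disjoint_sum (indep_cap indS0); rewrite PS_rank in e.
have [j nj] : exists j, ~~ ((delta_mx 0 j : 'rV[K]_n) <= PS S0 + Nk v)%MS.
  apply/existsP; apply: contraLR lt => /existsPn h; rewrite -leqNgt -e.
  rewrite -{1}(mxrank1 K n) mxrankS //; apply/row_subP => i.
  by rewrite row1; apply/negPn/h.
have jS0 : j \notin S0.
  by apply: contra nj => jS; rewrite (submx_trans (PS_row jS)) // addsmxSl.
have ind' : Fq_indep phi v (j |: S0).
  apply/forallP => a; apply/implyP => L0.
  have xN : (yS (j |: S0) a <= Nk v)%MS by rewrite Nk_sub Lf_yS (eqP L0).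
  have ex : yS (j |: S0) a = yS S0 a + a j *: delta_mx 0 j.
    apply/matrixP => i i'; rewrite ord1 !mxE in_setU1 /=.
    case: (eqVneq i' j) => [->|ni]; first by rewrite (negbTE jS0) add0r mulr1.
    by rewrite /= mulr0 addr0.
  have aj : a j = 0.
    apply/eqP; apply: contraR nj => nz.
    have -> : (delta_mx 0 j : 'rV[K]_n) = (a j)^-1 *: (yS (j |: S0) a - yS S0 a).
      by rewrite ex addrAC subrr add0r scalerA mulVf // scale1r.
    rewrite scalemx_sub // addrC; apply: addmx_sub_adds => //.
    by rewrite -scaleN1r scalemx_sub // yS_sub.
  have L1 : \sum_(i in S0) phi (a i) * v 0 i == 0.
    move: xN; rewrite ex aj scale0r addr0 Nk_sub Lf_yS; by [].
  have /implyP/(_ L1)/forall_inP a0 := forallP indS0 a.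
  apply/forall_inP => i; rewrite in_setU1 => /orP [/eqP ->|iS]; first by rewrite aj.
  exact: a0.
have := @leq_bigmax_cond _ (Fq_indep phi v) (fun S : {set 'I_n} => #|S|) _ ind'.
rewrite eS0 cardsU1 jS0; lia.
Qed.

End PartB.
Section PartC.
Variables (K : finFieldType).

Lemma nonfree_ker (L : fieldType) m p (X : 'M[L]_(m, p)) :
  ~~ row_free X -> exists2 u : 'rV[L]_m, u != 0 & u *m X = 0.
Proof.
rewrite -kermx_eq0 => kn0.
have [i ui] : exists i, row i (kermx X) != 0.
  apply/existsP; apply: contraR kn0 => /existsPn h.
  apply/eqP/row_matrixP => i; rewrite row0; exact/eqP/negPn/h.
by exists (row i (kermx X)) => //; rewrite -row_mul mulmx_ker row0.
Qed.

Lemma ext_basis k n (A : 'M[K]_n) : (\rank A <= k)%N -> (k <= n)%N ->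
  exists B2 : 'M[K]_(k, n), \rank B2 = k /\ (A <= B2)%MS.
Proof.
move=> rAk kn.
exists (pid_mx k *m row_ebase A); split.
  by rewrite mxrankMfree ?row_free_unit ?row_ebase_unit // rank_pid_mx.
rewrite -(eq_row_base A) /row_base.
have -> : (pid_mx (\rank A) : 'M[K]_(\rank A, n)) =
    (pid_mx (\rank A) : 'M[K]_(\rank A, k)) *m (pid_mx k : 'M[K]_(k, n)).
  by rewrite mul_pid_mx; congr pid_mx; lia.
by rewrite -mulmxA submxMl.
Qed.

Lemma inj_of_full (L : fieldType) (f : {rmorphism K -> L}) k n (H : 'M[L]_(k, n)) :
  (k <= n)%N ->
  (forall B2 : 'M[K]_(k, n), \rank B2 = k -> row_free (map_mx f B2 *m H^T)) ->
  forall A : 'M[K]_n, (\rank A <= k)%N -> \rank (Tm f H A) = \rank A.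
Proof.
move=> kn hfull A rAk.
apply/eqP; rewrite eqn_leq; apply/andP; split.
  by rewrite /Tm (leq_trans (mxrankM_maxl _ _)) // mxrank_map.
have [B2 [rB2 sAB]] := ext_basis rAk kn.
have eT : (map_mx f (row_base A) *m H^T :=: Tm f H A)%MS.
  by apply: eqmxMr; apply/map_eqmx; apply: eq_row_base.
rewrite -eT.
have : (row_base A <= B2)%MS by rewrite eq_row_base.
case/submxP => X eX.
rewrite eX map_mxM -mulmxA mxrankMfree ?hfull // mxrank_map.
by have := mxrankM_maxl X B2; rewrite -eX eq_row_base.
Qed.

Lemma inj_G (F : fieldType) (phi : {rmorphism K -> F}) k n (G : 'M[F]_(k, n)) :
  row_free G -> MRD phi G ->
  forall A : 'M[K]_n, (\rank A <= k)%N -> \rank (Tm phi G A) = \rank A.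
Proof.
move=> fG mrd.
have kn : (k <= n)%N by rewrite -(eqP fG) rank_leq_col.
apply: inj_of_full => // B2 rB2.
apply/negPn/negP => nf.
have : ~~ row_free (map_mx phi B2 *m G^T)^T by rewrite row_free_unit unitmx_tr -row_free_unit.
move=> /nonfree_ker [u un0]; rewrite trmx_mul trmxK mulmxA => uM.
set v := u *m G.
have vn0 : v != 0 by rewrite /v mulmx_free_eq0.
have sBN : (B2 <= Nk phi v)%MS.
  apply/row_subP => r; rewrite Nk_sub.
  move/matrixP: (uM) => /(_ 0 r).
  rewrite /= !mxE => <-.
  rewrite /Lf; apply/eqP; apply: eq_bigr => j _; rewrite !mxE mulrC.
  by [].
have := mxrankS sBN; rewrite rB2 => kN.
have := Fq_rank_le phi v; have := mrd u vn0; rewrite -/v; lia.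
Qed.

End PartC.
Section PartD.
Variables (K : finFieldType).

Definition embR (R : fieldType) (psi : {rmorphism K -> R}) (k n : nat) :
  {rmorphism K -> ratfun R k n} :=
  (@tofrac _ \o (@mpolyC (k * n) R) \o psi)%FUN.

Definition Wp (R : fieldType) k n : 'M[{mpoly R[k * n]}]_(k, n) :=
  \matrix_(i < k, j < n) ('X_(mxvec_index i j) : {mpoly R[k * n]}).

Lemma Wmat_Wp (R : fieldType) k n : Wmat R k n = map_mx (@tofrac _) (Wp R k n).
Proof. by apply/matrixP => i j; rewrite !mxE. Qed.

Lemma inj_W (R : fieldType) (psi : {rmorphism K -> R}) k n : (k <= n)%N ->
  forall A : 'M[K]_n, (\rank A <= k)%N ->
    \rank (Tm (embR psi k n) (Wmat R k n) A) = \rank A.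
Proof.
move=> kn; apply: inj_of_full => // B2 rB2.
have fB2 : row_free B2 by rewrite /row_free rB2.
case/row_freeP: fB2 => B' eB.
set g : {rmorphism K -> {mpoly R[k * n]}} := ((@mpolyC (k * n) R) \o psi)%FUN.
set P := map_mx g B2 *m (Wp R k n)^T.
have eP : map_mx (embR psi k n) B2 *m (Wmat R k n)^T = map_mx (@tofrac _) P.
  rewrite /P map_mxM Wmat_Wp; congr (_ *m _).
    by rewrite -map_mx_comp.
  by apply/matrixP => i j; rewrite !mxE.
set M : 'M[R]_(k, n) := (map_mx psi B')^T.
set x : 'I_(k * n) -> R := fun idx => (mxvec M) 0 idx.
have eval : map_mx (meval x) P = 1%:M.
  rewrite /P map_mxM -map_trmx -map_mx_comp.
  have -> : map_mx (meval x) (Wp R k n) = M.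
    by apply/matrixP => i j; rewrite !mxE mevalXU /x mxvecE !mxE.
  have -> : map_mx (meval x \o g) B2 = map_mx psi B2.
    by apply: eq_map_mx => a; rewrite /= mevalC.
  by rewrite /M trmxK -map_mxM eB map_mx1.
rewrite eP row_free_unit unitmxE unitfE det_map_mx /= tofrac_eq0.
apply/eqP => d0.
have := congr1 (meval x) d0; rewrite -det_map_mx eval det1 meval0.
by move/eqP; rewrite oner_eq0.
Qed.

End PartD.
Section PartE.
Local Open Scope quotient_scope.
Variables (R1 R2 : idomainType) (f : {rmorphism R1 -> R2}).
Hypothesis fnz : forall b, b != 0 -> f b != 0.

Lemma pi_frac (R : idomainType) (r : {ratio R}) :
  (\pi_({fraction R}) r) = tofrac \n_r / tofrac \d_r.
Proof.
have d0 : tofrac \d_r != 0 :> {fraction R} by rewrite tofrac_eq0 denom_ratioP.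
apply: (canRL (mulfK d0)).
unlock tofrac.
rewrite -[LHS]FracField.pi_mul.
apply/eqmodP; rewrite /= FracField.equivfE /FracField.mulf.
rewrite !numden_Ratio ?mulf_neq0 ?oner_neq0 ?denom_ratioP //.
by rewrite !mulr1 mulrC.
Qed.

Lemma frac_repr (R : idomainType) (x : {fraction R}) :
  exists a b, b != 0 /\ x = tofrac a / tofrac b.
Proof.
exists \n_(repr x), \d_(repr x); split; first exact: denom_ratioP.
by rewrite -pi_frac reprK.
Qed.

Definition fracmap (x : {fraction R1}) : {fraction R2} :=
  tofrac (f \n_(repr x)) / tofrac (f \d_(repr x)).

Lemma fracmapE a b : b != 0 ->
  fracmap (tofrac a / tofrac b) = tofrac (f a) / tofrac (f b).
Proof.
move=> b0; rewrite /fracmap.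
set x := tofrac a / tofrac b.
have dn : \d_(repr x) != 0 by apply: denom_ratioP.
have ex : x = tofrac \n_(repr x) / tofrac \d_(repr x) by rewrite -pi_frac reprK.
have e : a * \d_(repr x) = \n_(repr x) * b.
  apply/eqP; rewrite -tofrac_eq !rmorphM /=; apply/eqP.
  apply/eqP; rewrite -eqr_div ?tofrac_eq0 //; apply/eqP.
  by rewrite -ex.
apply/eqP; rewrite eqr_div ?tofrac_eq0 ?fnz //.
by rewrite -!tofracM -!rmorphM e mulrC.
Qed.

Lemma fracmap1 : fracmap 1 = 1.
Proof.
have -> : (1 : {fraction R1}) = tofrac 1 / tofrac 1 by rewrite rmorph1 divr1.
by rewrite fracmapE ?oner_neq0 // !rmorph1 divr1.
Qed.

Lemma subf_div' (L : fieldType) (x1 y1 x2 y2 : L) : y1 != 0 -> y2 != 0 ->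
  x1 / y1 - x2 / y2 = (x1 * y2 - x2 * y1) / (y1 * y2).
Proof. by move=> h1 h2; rewrite -mulNr addf_div // mulNr. Qed.

Lemma fracmapB : {morph fracmap : x y / x - y}.
Proof.
move=> x y.
have [a [b [b0 ->]]] := frac_repr x; have [c [d [d0 ->]]] := frac_repr y.
rewrite subf_div' ?tofrac_eq0 // -!tofracM -tofracB fracmapE ?mulf_neq0 //.
rewrite !fracmapE ?mulf_neq0 // [RHS]subf_div' ?tofrac_eq0 ?fnz //.
by rewrite -!tofracM -tofracB rmorphB !rmorphM.
Qed.

Lemma fracmapM : {morph fracmap : x y / x * y}.
Proof.
move=> x y.
have [a [b [b0 ->]]] := frac_repr x; have [c [d [d0 ->]]] := frac_repr y.
have bd : b * d != 0 by rewrite mulf_neq0.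
rewrite mulf_div -!tofracM fracmapE // !fracmapE //.
by rewrite [RHS]mulf_div !rmorphM.
Qed.

Lemma fracmap_tofrac a : fracmap (tofrac a) = tofrac (f a).
Proof.
have -> : tofrac a = tofrac a / tofrac 1 :> {fraction R1} by rewrite rmorph1 divr1.
by rewrite fracmapE ?oner_neq0 // rmorph1 divr1.
Qed.

End PartE.

Definition fracmapR (R1 R2 : idomainType) (f : {rmorphism R1 -> R2})
  (fnz : forall b, b != 0 -> f b != 0) := fracmap f.
HB.instance Definition _ R1 R2 f fnz :=
  GRing.isZmodMorphism.Build {fraction R1} {fraction R2} (@fracmapR R1 R2 f fnz)
    (fracmapB fnz).
HB.instance Definition _ R1 R2 f fnz :=
  GRing.isMonoidMorphism.Build {fraction R1} {fraction R2} (@fracmapR R1 R2 f fnz)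
    (conj (fracmap1 fnz) (fracmapM fnz)).
Section PartF.
Variable K : finFieldType.

Lemma capV_ext (L : fieldType) (psi1 psi2 : K -> L) k n l (H : 'M[L]_(k, n))
  (V : 'I_l -> 'M[K]_n) : psi1 =1 psi2 -> capV psi1 H V = capV psi2 H V.
Proof.
move=> e; rewrite /capV; apply: eq_bigr => i _; rewrite /subV.
by congr (<< _ *m _ >>)%MS; apply/matrixP => a b; rewrite !mxE e.
Qed.

Lemma map_bigcap_gen (L1 L2 : fieldType) (mu : {rmorphism L1 -> L2}) m n
  (I : finType) (P : pred I) (A : I -> 'M[L1]_(m, n)) :
  (map_mx mu (\bigcap_(i | P i) <<A i>>) == \bigcap_(i | P i) <<map_mx mu (A i)>>)%MS.
Proof.
apply: (big_rec2 (fun X Y => (map_mx mu X == Y)%MS)).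
  by rewrite map_mx1; apply/eqmxP; apply: eqmx_refl.
move=> i X Y _ /eqmxP eXY; apply/eqmxP.
apply: eqmx_trans (map_capmx mu _ _) _.
by apply: cap_eqmx => //; apply: map_genmx.
Qed.

Lemma transfer (L1 L2 : fieldType) (mu : {rmorphism L1 -> L2})
  (f1 : {rmorphism K -> L1}) (psi2 : K -> L2) k n l (H : 'M[L1]_(k, n))
  (H2 : 'M[L2]_(k, n)) (V : 'I_l -> 'M[K]_n) :
  psi2 =1 (mu \o f1)%FUN -> H2 = map_mx mu H ->
  \rank (capV f1 H V) = \rank (capV psi2 H2 V).
Proof.
move=> epsi ->; rewrite (capV_ext _ _ epsi) !capV_T.
rewrite (eq_bigr (fun i => <<map_mx mu (Tm f1 H (V i))>>%MS)); last first.
  move=> i _; congr (<< _ >>)%MS.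
  by rewrite /Tm map_mxM map_trmx map_mx_comp.
have /eqmxP <- := map_bigcap_gen mu (fun _ => true) (fun i => Tm f1 H (V i)).
by rewrite mxrank_map.
Qed.
End PartF.
Section PartG.
Variable K : finFieldType.

Lemma capV_const (L : fieldType) (f : {rmorphism K -> L}) k n l (H : 'M[L]_(k, n))
  (A : 'M[K]_n) (i0 : 'I_l) :
  \rank (capV f H (fun _ : 'I_l => A)) = \rank (Tm f H A).
Proof.
rewrite (capV_split _ _ _ i0).
have h : (<<Tm f H A>> <= \bigcap_(i < l | i != i0) <<Tm f H A>>)%MS.
  by apply/sub_bigcapmxP => i _; apply: submx_refl.
by rewrite (capmx_idPl h) genmxE.
Qed.

Lemma transfer_W (F : fieldType) (phi : {rmorphism K -> F}) k n l
  (V : 'I_l -> 'M[K]_n) :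
  \rank (capV (@embZ K K id k n) (Wmat K k n) V) =
  \rank (capV (@embZ K F phi k n) (Wmat F k n) V).
Proof.
have fnz : forall b : {mpoly K[k * n]}, b != 0 -> map_mpoly phi b != 0.
  move=> b bn0; apply: contra bn0 => /eqP e; apply/eqP/mpolyP => m.
  have := congr1 (mcoeff m) e; rewrite mcoeff_map_mpoly mcoeff0 => /eqP.
  by rewrite fmorph_eq0 mcoeff0 => /eqP.
pose mu : {rmorphism ratfun K k n -> ratfun F k n} := fracmapR fnz.
change (\rank (capV (embR idfun k n) (Wmat K k n) V) =
        \rank (capV (embZ phi k n) (Wmat F k n) V)).
apply: (transfer (mu := mu)).
  move=> a; rewrite /= /mu /fracmapR fracmap_tofrac //.
  by rewrite /embZ; congr (tofrac _); rewrite /= map_mpolyC.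
apply/matrixP => i j; rewrite !mxE /mu /fracmapR.
apply: esym; apply: etrans (fracmap_tofrac fnz _) _.
by congr (tofrac _); rewrite /= map_mpolyX.
Qed.

End PartG.

Theorem mainTheorem18 (K : finFieldType) (F : fieldType) (phi : {rmorphism K -> F})
  (l k n : nat) (G : 'M[F]_(k, n)) :
  (1 <= l)%N -> row_free G ->
  (MRDl phi l G <->
   (MRD phi G /\
    forall V : 'I_l -> 'M[K]_n, (forall i, (\rank (V i) <= k)%N) ->
      ((capV phi G V == (0 : 'M_k))%MS =
       (capV (@embZ K F phi k n) (Wmat F k n) V == (0 : 'M_k))%MS))).
Proof.
move=> hl fG.
have kn : (k <= n)%N by rewrite -(eqP fG) rank_leq_col.
pose i0 : 'I_l := Ordinal hl.
split.
  move=> mrdl; split; last first.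
    by move=> V rV; rewrite !eq0_rank (mrdl V rV) (transfer_W phi).
  move=> u vn0; set v := u *m G.
  rewrite leqNgt; apply/negP => lt.
  have rN : (k <= \rank (Nk phi v))%N.
    have := Fq_rank_ge phi v; lia.
  have [X [rX sX]] : exists X : 'M[K]_n, \rank X = k /\ (X <= Nk phi v)%MS.
    exists <<(pid_mx k : 'M[K]_(k, n)) *m row_ebase (Nk phi v)>>%MS; rewrite !genmxE; split.
      by rewrite mxrankMfree ?row_free_unit ?row_ebase_unit // rank_pid_mx.
    rewrite -(eq_row_base (Nk phi v)) /row_base.
    have -> : (pid_mx k : 'M[K]_(k, n)) =
        (pid_mx k : 'M[K]_(k, \rank (Nk phi v))) *m
        (pid_mx (\rank (Nk phi v)) : 'M[K]_(\rank (Nk phi v), n)).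
      by rewrite mul_pid_mx; congr pid_mx; lia.
    by rewrite -mulmxA submxMl.
  have e := mrdl (fun _ => X) (fun _ => eq_leq rX).
  have e2 : \rank (capV (@embZ K K id k n) (Wmat K k n) (fun _ : 'I_l => X)) = k.
    change (\rank (capV (embR idfun k n) (Wmat K k n) (fun _ : 'I_l => X)) = k).
    by rewrite (capV_const _ _ _ i0) inj_W // rX.
  rewrite e2 (capV_const _ _ _ i0) in e.
  have fT : row_full (Tm phi G X) by rewrite /row_full e.
  case/row_fullP: fT => B eB.
  have h0 : Tm phi G X *m u^T = 0.
    apply/matrixP => r c; rewrite ord1 [RHS]mxE.
    have : Lf phi v (row r X) == 0.
      by rewrite -Nk_sub (submx_trans (row_sub _ _)).
    move/eqP => <-.
    rewrite /Tm -mulmxA -trmx_mul -/v mxE /Lf.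
    by apply: eq_bigr => j _; rewrite !mxE.
  have : u^T = 0 by rewrite -[u^T]mul1mx -eB -mulmxA h0 mulmx0.
  move/eqP; rewrite trmx_eq0 => /eqP u0.
  by move: vn0; rewrite u0 mul0mx eqxx.
case=> mrd zeq V rV.
rewrite (transfer_W phi).
change (\rank (capV phi G V) = \rank (capV (embR phi k n) (Wmat F k n) V)).
apply: (main_ind i0) => //.
- exact: inj_G.
- exact: inj_W.
Qed.
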